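(* Let $M,N\in\Lambda_\bot^{001}$ be such that neither $M$ nor $N$ contains a subterm of the form $\lambda x.\bot$ or $(\bot)P$. If $\mathcal T(M)=\mathcal T(N)$ then $M=N$.
   Context: $\Lambda_\bot^{001}$: possibly infinite trees built from variables, a constant $\bot$, abstractions $\lambda x.M$ and applications $(M)N$, whose infinite branches all enter infinitely often the argument position $N$ of an application, up to α-equivalence. Resource terms: $s::=x\mid\lambda x.s\mid\langle s\rangle\bar t$, with $\bar t=[t_1,\dots,t_n]$ a finite multiset of resource terms. Taylor approximation $\ltimes$ is defined inductively: $x\ltimes x$; $s\ltimes M\Rightarrow\lambda x.s\ltimes\lambda x.M$; ($s\ltimes M$ and $t_i\ltimes N$ for all $1\le i\le n$) $\Rightarrow\langle s\rangle[t_1,\dots,t_n]\ltimes(M)N$; no resource term approximates $\bot$. $\mathcal T(M)=\{s : s\ltimes M\}$. *)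

(* Defs.v *)
From Stdlib Require Import List Arith.
Import ListNotations.

(* Possibly infinite lambda-terms with a constant bot; variables are de Bruijn
   indices, so alpha-equivalence is built in. *)
CoInductive term : Type :=
| Var : nat -> term
| Bot : term
| Lam : term -> term
| App : term -> term -> term.

(* Equality of (possibly infinite) trees: bisimilarity. *)
CoInductive bisim : term -> term -> Prop :=
| bisim_var n : bisim (Var n) (Var n)
| bisim_bot : bisim Bot Bot
| bisim_lam M N : bisim M N -> bisim (Lam M) (Lam N)
| bisim_app M M' N N' : bisim M N -> bisim M' N' -> bisim (App M M') (App N N').

Inductive dir : Type := Body | Fun | Arg.

Definition step (t : term) (d : dir) : option term :=
  match t, d with
  | Lam s, Body => Some s
  | App s _, Fun => Some s
  | App _ u, Arg => Some u
  | _, _ => None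
  end.

Fixpoint follow (t : term) (b : nat -> dir) (n : nat) : option term :=
  match n with
  | 0 => Some t
  | S n => match follow t b n with
           | Some s => step s (b n)
           | None => None
           end
  end.

Definition infinite_branch (t : term) (b : nat -> dir) : Prop :=
  forall n, follow t b n <> None.

Definition is001 (t : term) : Prop :=
  forall b, infinite_branch t b -> forall n, exists m, n <= m /\ b m = Arg.

Inductive subterm : term -> term -> Prop :=
| sub_refl t : subterm t t
| sub_lam s t : subterm s t -> subterm s (Lam t)
| sub_appl s t u : subterm s t -> subterm s (App t u)
| sub_appr s t u : subterm s u -> subterm s (App t u).

Definition forbidden (t : term) : Prop :=
  match t with
  | Lam Bot => True
  | App Bot _ => True
  | _ => False
  end.

(* Resource terms; the finite multiset [t1,...,tn] is represented by a list
   (the approximation relation is invariant under permutation of the list). *)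
Inductive rterm : Type :=
| RVar : nat -> rterm
| RLam : rterm -> rterm
| RApp : rterm -> list rterm -> rterm.

Inductive approx : rterm -> term -> Prop :=
| approx_var x : approx (RVar x) (Var x)
| approx_lam s M : approx s M -> approx (RLam s) (Lam M)
| approx_app s ts M N :
    approx s M -> Forall (fun t => approx t N) ts -> approx (RApp s ts) (App M N).

Definition taylor (M : term) : rterm -> Prop := fun s => approx s M.

(* Main.v *)
Require Import Defs.
From Stdlib Require Import List Arith Lia Classical.
Import ListNotations.

Lemma follow_S t b n :
  follow t b (S n) = match step t (b 0) with
                     | Some s => follow s (fun k => b (S k)) n
                     | None => None end.
Proof.
  induction n.
  - simpl. destruct (step t (b 0)); reflexivity.
  - change (follow t b (S (S n))) with
      (match follow t b (S n) with Some s => step s (b (S n)) | None => None end).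
    rewrite IHn. destruct (step t (b 0)); reflexivity.
Qed.

Definition good t := is001 t /\ forall s, subterm s t -> ~ forbidden s.

Lemma is001_step t d s : is001 t -> step t d = Some s -> is001 s.
Proof.
  intros H Hs b Hb n.
  set (b' := fun k => match k with 0 => d | S k => b k end).
  assert (Hb' : infinite_branch t b').
  { intros [|k]. simpl. discriminate.
    rewrite follow_S. simpl. rewrite Hs. apply Hb. }
  destruct (H b' Hb' (S n)) as [[|m] [Hm1 Hm2]]. lia.
  exists m. split. lia. exact Hm2.
Qed.

Lemma good_step t d s : good t -> step t d = Some s -> good s.
Proof.
  intros [H1 H2] Hs. split. eapply is001_step; eauto.
  intros s' Hs'. apply H2.
  destruct t, d; simpl in Hs; try discriminate; injection Hs; intros; subst.
  - apply sub_lam; auto.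
  - apply sub_appl; auto.
  - apply sub_appr; auto.
Qed.

Definition fsp (t : term) : term :=
  match t with Lam s => s | App s _ => s | x => x end.
Fixpoint iter (t : term) (n : nat) : term :=
  match n with 0 => t | S n => fsp (iter t n) end.
Lemma iter_S t n : iter t (S n) = iter (fsp t) n.
Proof. induction n. reflexivity. simpl in *. rewrite IHn. reflexivity. Qed.

Definition dirOf (t : term) : dir :=
  match t with App _ _ => Fun | _ => Body end.

Lemma ne_aux n : forall M, (forall s, subterm s M -> ~ forbidden s) -> M <> Bot ->
  (exists k, iter M n = Var k \/ iter M n = Bot) -> exists s, approx s M.
Proof.
  induction n; intros M HF HB [k Hk].
  - simpl in Hk. destruct Hk as [Hk|Hk]; subst. eexists; constructor. congruence.
  - rewrite iter_S in Hk. destruct M.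
    + eexists; constructor.
    + congruence.
    + destruct (IHn M) as [s Hs].
      * intros s Hs. apply HF. apply sub_lam; auto.
      * intro; subst. apply (HF (Lam Bot)). constructor. simpl; auto.
      * exists k; exact Hk.
      * exists (RLam s). constructor; auto.
    + destruct (IHn M1) as [s Hs].
      * intros s Hs. apply HF. apply sub_appl; auto.
      * intro; subst. apply (HF (App Bot M2)). constructor. simpl; auto.
      * exists k; exact Hk.
      * exists (RApp s []). constructor; auto.
Qed.

Lemma ne M : good M -> M <> Bot -> exists s, approx s M.
Proof.
  intros [H1 H2] HB.
  destruct (classic (exists n k, iter M n = Var k \/ iter M n = Bot)) as [[n Hn]|Hn].
  - eapply ne_aux; eauto.
  - exfalso.
    assert (Hall : forall n, (exists a, iter M n = Lam a) \/ exists a c, iter M n = App a c).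
    { intro n. destruct (iter M n) eqn:E.
      - exfalso. apply Hn. exists n, n0. auto.
      - exfalso. apply Hn. exists n, 0. auto.
      - left; eauto.
      - right; eauto. }
    set (b := fun n => dirOf (iter M n)).
    assert (Hf : forall n, follow M b n = Some (iter M n)).
    { induction n. reflexivity. simpl. rewrite IHn. unfold b.
      destruct (Hall n) as [[a E]|[a [c E]]]; rewrite E; reflexivity. }
    destruct (H1 b (fun n => ltac:(rewrite Hf; discriminate)) 0) as [m [_ Hm]].
    unfold b in Hm. destruct (iter M m); discriminate.
Qed.

Lemma bisim_main : forall M N, good M -> good N ->
  (forall s, approx s M <-> approx s N) -> bisim M N.
Proof.
  cofix CIH. intros M N GM GN H.
  assert (mis : forall A B, good A -> (forall s, approx s A -> approx s B) -> A <> Bot ->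
    match A, B with
    | Var n, Var m => n = m
    | Lam _, Lam _ => True
    | App _ _, App _ _ => True
    | _, _ => False end).
  { intros A B GA HAB HA. destruct (ne A GA HA) as [s Hs].
    pose proof (HAB s Hs) as Hs'.
    inversion Hs; subst; inversion Hs'; subst; auto. }
  destruct M as [n| |M'|P Q].
  - pose proof (mis (Var n) N GM (fun s => proj1 (H s)) ltac:(discriminate)) as X.
    destruct N; try contradiction. subst. constructor.
  - destruct N.
    + destruct (mis _ _ GN (fun s => proj2 (H s)) ltac:(discriminate)).
    + constructor.
    + destruct (mis _ _ GN (fun s => proj2 (H s)) ltac:(discriminate)).
    + destruct (mis _ _ GN (fun s => proj2 (H s)) ltac:(discriminate)).
  - pose proof (mis (Lam M') N GM (fun s => proj1 (H s)) ltac:(discriminate)) as X.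
    destruct N as [| |N'|]; try contradiction.
    constructor. apply CIH.
    + exact (good_step _ Body _ GM eq_refl).
    + exact (good_step _ Body _ GN eq_refl).
    + intro s; split; intro Hs.
      * assert (A : approx (RLam s) (Lam N')) by (apply H; constructor; auto).
        inversion A; auto.
      * assert (A : approx (RLam s) (Lam M')) by (apply H; constructor; auto).
        inversion A; auto.
  - pose proof (mis (App P Q) N GM (fun s => proj1 (H s)) ltac:(discriminate)) as X.
    destruct N as [| | |P' Q']; try contradiction.
    pose proof (good_step _ Fun _ GM eq_refl) as GP.
    pose proof (good_step _ Fun _ GN eq_refl) as GP'.
    assert (PB : P <> Bot).
    { intro; subst. apply (proj2 GM (App Bot Q)). constructor. simpl; auto. }
    assert (PB' : P' <> Bot).
    { intro; subst. apply (proj2 GN (App Bot Q')). constructor. simpl; auto. }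
    constructor; apply CIH; auto.
    + intro s; split; intro Hs.
      * assert (A : approx (RApp s []) (App P' Q')) by (apply H; constructor; auto).
        inversion A; auto.
      * assert (A : approx (RApp s []) (App P Q)) by (apply H; constructor; auto).
        inversion A; auto.
    + exact (good_step _ Arg _ GM eq_refl).
    + exact (good_step _ Arg _ GN eq_refl).
    + intro t; split; intro Ht.
      * destruct (ne P GP PB) as [s0 Hs0].
        assert (A : approx (RApp s0 [t]) (App P' Q')) by (apply H; constructor; auto).
        inversion A; subst. inversion H5; auto.
      * destruct (ne P' GP' PB') as [s0 Hs0].
        assert (A : approx (RApp s0 [t]) (App P Q)) by (apply H; constructor; auto).
        inversion A; subst. inversion H5; auto.
Qed.

Theorem mainTheorem14 (M N : term) :
  is001 M -> is001 N ->
  (forall s, subterm s M -> ~ forbidden s) ->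
  (forall s, subterm s N -> ~ forbidden s) ->
  (forall s, taylor M s <-> taylor N s) ->
  bisim M N.
Proof.
  intros. apply bisim_main; [split; auto | split; auto | exact H3].
Qed.
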